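(* Let $\{M_p\mid p\in P\}$ be a Morse decomposition of a multivector field on a finite simplicial complex $K$, with associated $P$-filtered chain complex $(C,d)$, and let $f:K\to\mathbb R$ be Lyapunov for this Morse decomposition. Let $P_f$ and $P'_f$ be two $f$-compatible orders of $P$, and let $(\bar C,\bar d)$ and $(\bar C',\bar d')$ be Conley complexes of $(C,d)$. Then $\mathrm{pers}(H(\bar{\mathbf C},P_f))=\mathrm{pers}(H(\mathbf F,P_f))=\mathrm{pers}(H(\mathbf F',P'_f))=\mathrm{pers}(H(\bar{\mathbf C}',P'_f))$.
   Context: $K$ is a finite simplicial complex; a multivector field $\mathcal V$ on $K$ is a partition of $K$ into convex sets $V$ (if $\sigma,\tau\in V$ and $\sigma\le\mu\le\tau$ in the face order then $\mu\in V$); $F_{\mathcal V}(\sigma)=[\sigma]_{\mathcal V}\cup\{\tau:\tau\le\sigma\}$ where $[\sigma]_{\mathcal V}$ is the part containing $\sigma$; a path is a sequence $\sigma_1,\dots,\sigma_r$ with $\sigma_k\in F_{\mathcal V}(\sigma_{k-1})$. A Morse decomposition indexed by a finite poset $(P,\le_P)$ is a partition $K=\bigsqcup_{p\in P}M_p$ such that every path from $M_p$ to $M_q$ has $q\le_P p$. Let $m=|P|$. $(C,d)$: $C_p$ is the $\mathbb Z_2$-span of the simplices in $M_p$ (graded by dimension), $C=\bigoplus_pC_p$ the simplicial chains of $K$ over $\mathbb Z_2$, $d$ the simplicial boundary. For $P$-graded spaces and a linear map $h$, $h_{pq}=\pi_p h\iota_q$, and $h$ is $P$-filtered if $h_{pq}\ne0\Rightarrow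 p\le_P q$. A $P$-filtered chain complex is a $\mathbb Z_2$ chain complex with a $P$-gradation (compatible with degree) whose differential is $P$-filtered. Filtered chain maps are $P$-filtered chain maps; filtered chain maps $\varphi,\psi$ are filtered chain homotopic if $\psi-\varphi=d'S+Sd$ for some $P$-filtered degree-raising-by-one linear $S$; two $P$-filtered complexes are filtered chain homotopic if there are filtered chain maps $\varphi,\varphi'$ between them with $\varphi'\varphi$ and $\varphi\varphi'$ filtered chain homotopic to the identities. A Conley complex of $(C,d)$ is a $P$-filtered chain complex $(\bar C,\bar d)$ filtered chain homotopic to $(C,d)$ with $\bar d_{pp}=0$ for all $p$. $f:K\to\mathbb R$ is Lyapunov (for the Morse decomposition) if $f$ is constant on each $M_p$, with value denoted $f(p)$, and $p\le_P q$ implies $f(p)\le f(q)$. An $f$-compatible order $P_f$ is an enumeration $p_1,\dots,p_m$ of $P$ that is a linear extension of $\le_P$ with $f(p_1)\le\dots\le f(p_m)$. For a $P$-filtered chain complex $(D,\delta)$, set $\mathbf D_{p_i}=\bigoplus_{j\le i}D_{p_j}$ (a subcomplex) and let $H(\mathbf D,P_f)$ be the persistence module $H_*(\mathbf D_{p_1})\to\dots\to H_*(\mathbf D_{p_m})$ with inclusion-induced maps. $K_i=\bigsqcup_{j\le i}M_{p_j}$ is a subcomplex of $K$ and $H(\mathbf F,P_f)$ is $H_*(C(K_1))\to\dots\to H_*(C(K_m))$ with inclusion-induced maps, $C(K_i)$ the simplicial chains of $K_i$ over $\mathbb Z_2$; $\mathbf F'$, $\bar{\mathbf C}'$ denote the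 same constructions for $P'_f$ and $(\bar C',\bar d')$. For such a module $V_1\to\dots\to V_m$ indexed by $P_f$, $\mathrm{pers}$ is the persistence diagram: decompose each homological degree into interval modules $[a,b]$, $1\le a\le b\le m$, and record for each the point $(f(p_a),f(p_{b+1}))$ with $f(p_{m+1}):=+\infty$, discarding points with $f(p_a)=f(p_{b+1})$; the result is a multiset of points per degree. *)

(* Defs.v *)
From HB Require Import structures.
From mathcomp Require Import all_boot all_order all_algebra.
From mathcomp Require Import reals.

Set Implicit Arguments.
Unset Strict Implicit.
Unset Printing Implicit Defensive.

Import Order.TTheory GRing.Theory Num.Theory.
Local Open Scope ring_scope.

(* A simplex is a nonempty finite set of vertices; dim sigma = #|sigma|-1.  *)

Definition simplicial_complex (V : finType) (K : {set {set V}}) : Prop :=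
  set0 \notin K /\
  forall s t : {set V}, s \in K -> t != set0 -> t \subset s -> t \in K.

Definition convex_in (V : finType) (K A : {set {set V}}) : Prop :=
  forall s t m : {set V}, s \in A -> t \in A -> m \in K ->
    s \subset m -> m \subset t -> m \in A.

Definition multivector_field (V : finType) (K : {set {set V}})
    (mv : {set {set {set V}}}) : Prop :=
  partition mv K /\ forall A, A \in mv -> convex_in K A.

Definition Fmv (V : finType) (K : {set {set V}}) (mv : {set {set {set V}}})
    (s : {set V}) : {set {set V}} :=
  pblock mv s :|: [set t in K | t \subset s].

Definition mv_path (V : finType) (K : {set {set V}}) (mv : {set {set {set V}}})
    (x : {set V}) (s : seq {set V}) : bool :=
  (x \in K) && path (fun a b => b \in Fmv K mv a) x s.

Definition morse_decomposition (V : finType) (K : {set {set V}})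
    (mv : {set {set {set V}}}) (d : Order.disp_t) (P : finPOrderType d)
    (M : P -> {set {set V}}) : Prop :=
  [/\ forall p, M p \subset K,
      forall p, M p != set0,
      forall p q, p != q -> [disjoint M p & M q],
      forall s, s \in K -> exists p, s \in M p &
      forall (p q : P) (x : {set V}) (s : seq {set V}),
        mv_path K mv x s -> x \in M p -> last x s \in M q -> (q <= p)%O].

(* P-filtered chain complexes over Z_2, in a chosen homogeneous basis.      *)
(* Chains are row vectors 'rV['F_2]_n; basis element i has P-grade gr i and *)
(* homological degree dg i.  dm i j = coefficient of e_j in d(e_i), so the  *)
(* differential is v |-> v *m dm.                                           *)

Record fcomplex (d : Order.disp_t) (P : finPOrderType d) := FComplex {
  fc_n : nat;
  fc_gr : 'I_fc_n -> P;
  fc_dg : 'I_fc_n -> nat;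
  fc_d : 'M['F_2]_fc_n
}.
Arguments FComplex {d P} fc_n fc_gr fc_dg fc_d.
Arguments fc_n {d P} f : rename.
Arguments fc_gr {d P} f _ : rename.
Arguments fc_dg {d P} f _ : rename.
Arguments fc_d {d P} f : rename.

Definition fcomplex_wf d (P : finPOrderType d) (D : fcomplex P) : Prop :=
  [/\ forall i j, fc_d D i j != 0 -> fc_dg D i = (fc_dg D j).+1,
      forall i j, fc_d D i j != 0 -> (fc_gr D j <= fc_gr D i)%O &
      fc_d D *m fc_d D = 0].

(* A P-filtered linear map D1 -> D2 (matrix, row convention) raising degree
   by r (r = 0 for chain maps, r = 1 for homotopies). *)
Definition filtered_map d (P : finPOrderType d) (D1 D2 : fcomplex P) (r : nat)
    (A : 'M['F_2]_(fc_n D1, fc_n D2)) : Prop :=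
  forall i j, A i j != 0 ->
    (fc_gr D2 j <= fc_gr D1 i)%O /\ fc_dg D2 j = (fc_dg D1 i + r)%N.
Arguments filtered_map {d P} D1 D2 r A.

Definition filtered_chain_map d (P : finPOrderType d) (D1 D2 : fcomplex P)
    (A : 'M['F_2]_(fc_n D1, fc_n D2)) : Prop :=
  filtered_map D1 D2 0 A /\ fc_d D1 *m A = A *m fc_d D2.
Arguments filtered_chain_map {d P} D1 D2 A.

Definition filtered_homotopic d (P : finPOrderType d) (D1 D2 : fcomplex P)
    (A B : 'M['F_2]_(fc_n D1, fc_n D2)) : Prop :=
  exists S : 'M['F_2]_(fc_n D1, fc_n D2),
    filtered_map D1 D2 1 S /\ B - A = S *m fc_d D2 + fc_d D1 *m S.
Arguments filtered_homotopic {d P} D1 D2 A B.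

Definition filtered_chain_homotopy_equivalent d (P : finPOrderType d)
    (D1 D2 : fcomplex P) : Prop :=
  exists (phi : 'M['F_2]_(fc_n D1, fc_n D2)) (phi' : 'M['F_2]_(fc_n D2, fc_n D1)),
    [/\ filtered_chain_map D1 D2 phi, filtered_chain_map D2 D1 phi',
        filtered_homotopic D1 D1 (phi *m phi') 1%:M &
        filtered_homotopic D2 D2 (phi' *m phi) 1%:M].

(* The P-filtered chain complex (C,d) of a Morse decomposition:
   C = (+)_p C_p, C_p spanned by the simplices of M p; the basis is the set
   of pairs (p, sigma) with sigma \in M p; d is the simplicial boundary. *)
Definition morse_basis (V : finType) d (P : finPOrderType d)
    (M : P -> {set {set V}}) : {set P * {set V}} :=
  [set x : P * {set V} | x.2 \in M x.1].

Definition facet (V : finType) (t s : {set V}) : bool :=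
  (t \subset s) && (#|s| == #|t|.+1) && (t != set0).

Definition morse_complex (V : finType) d (P : finPOrderType d)
    (M : P -> {set {set V}}) : fcomplex P :=
  @FComplex d P #|morse_basis M|
    (fun i => (enum_val i).1)
    (fun i => #|(enum_val i).2|.-1)
    (\matrix_(i, j) (facet (enum_val j).2 (enum_val i).2)%:R).

Definition conley_complex (V : finType) d (P : finPOrderType d)
    (M : P -> {set {set V}}) (D : fcomplex P) : Prop :=
  [/\ fcomplex_wf D,
      filtered_chain_homotopy_equivalent D (morse_complex M) &
      forall i j, fc_d D i j != 0 -> fc_gr D i != fc_gr D j].

(* f(p): the common value of f on M p *)
Definition fval (V : finType) d (P : finPOrderType d) (R : realType)
    (M : P -> {set {set V}}) (f : {set V} -> R) (p : P) : R :=
  f (odflt set0 [pick s in M p]).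

Definition lyapunov (V : finType) d (P : finPOrderType d) (R : realType)
    (M : P -> {set {set V}}) (f : {set V} -> R) : Prop :=
  (forall p s t, s \in M p -> t \in M p -> f s = f t) /\
  (forall p q : P, (p <= q)%O -> fval M f p <= fval M f q).

(* An f-compatible order: an enumeration e 0, ..., e (m-1) of P (m = |P|),
   linear extension of <=_P, along which f(p) is nondecreasing. *)
Definition f_compatible_order (V : finType) d (P : finPOrderType d)
    (R : realType) (M : P -> {set {set V}}) (f : {set V} -> R)
    (e : 'I_#|P| -> P) : Prop :=
  [/\ injective e,
      forall i j, (e i <= e j)%O -> (i <= j)%N &
      forall i j : 'I_#|P|, (i <= j)%N -> fval M f (e i) <= fval M f (e j)].

(* A module V_0 -> ... -> V_(m-1) given as V_i = Z i / B i with B i <= Z i  *)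
(* subspaces (row spaces) of a fixed ambient 'rV['F_2]_N and the maps       *)
(* induced by the identity of the ambient space (inclusions).               *)

Record subquot_module (m : nat) := SubquotModule {
  sq_N : nat;
  sq_Z : 'I_m -> 'M['F_2]_sq_N;
  sq_B : 'I_m -> 'M['F_2]_sq_N
}.
Arguments SubquotModule {m} sq_N sq_Z sq_B.
Arguments sq_N {m} s : rename.
Arguments sq_Z {m} s _ : rename.
Arguments sq_B {m} s _ : rename.

(* Interval [a,b] (0-based, a <= b) alive at i *)
Definition alive m (ab : 'I_m * 'I_m) (i : 'I_m) : bool :=
  (ab.1 <= i <= ab.2)%N.

(* The bars bar : 'I_J -> 'I_m * 'I_m give an interval decomposition of the
   module X: there are linear maps Psi i : Z i -> F_2^J with kernel exactly
   B i and image exactly the coordinates of the bars alive at i, compatible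
   with the structure maps (structure map of (+)_j I[a_j,b_j] from i to i+1
   being the coordinate projection onto the bars alive at i+1).  This is
   precisely an isomorphism X ~= (+)_j I[a_j, b_j] of persistence modules. *)
Definition interval_decomposition m (X : subquot_module m) (J : nat)
    (bar : 'I_J -> 'I_m * 'I_m) : Prop :=
  (forall j, ((bar j).1 <= (bar j).2)%N) /\
  exists Psi : 'I_m -> 'M['F_2]_(sq_N X, J),
    [/\ forall i, (sq_Z X i :&: kermx (Psi i) == sq_B X i)%MS,
        forall i, (sq_Z X i *m Psi i ==
                   diag_mx (\row_j (alive (bar j) i)%:R))%MS &
        forall (i i' : 'I_m), nat_of_ord i' = (nat_of_ord i).+1 ->
          sq_Z X i *m Psi i' =
          sq_Z X i *m Psi i *m diag_mx (\row_j (alive (bar j) i')%:R)].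
Arguments interval_decomposition {m} X {J} bar.

(* The persistence diagram of a barcode, for the values fe i = f(p_i):
   bar [a,b] |-> (f(p_a), f(p_(b+1))), with f(p_m) = +oo encoded as None;
   points with f(p_a) = f(p_(b+1)) are discarded.  A multiset = a seq up to
   permutation. *)
Definition pers_diagram (R : realType) m (fe : 'I_m -> R) (J : nat)
    (bar : 'I_J -> 'I_m * 'I_m) : seq (R * option R) :=
  [seq (fe (bar j).1, omap fe (insub (bar j).2.+1 : option 'I_m))
   | j <- enum 'I_J & Some (fe (bar j).1) != omap fe (insub (bar j).2.+1)].
Arguments pers_diagram {R m} fe {J} bar.

Definition sel_mx n (b : 'I_n -> bool) : 'M['F_2]_n := diag_mx (\row_j (b j)%:R).

(* H_k(D_{p_0} (+) ... (+) D_{p_i}), i = 0..m-1, for a P-filtered complex D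
   and an enumeration e of P. *)
Definition in_prefix d (P : finPOrderType d) (e : 'I_#|P| -> P)
    (i : 'I_#|P|) (p : P) : bool :=
  [exists l : 'I_#|P|, (l <= i)%N && (e l == p)].

Definition fc_homology_module d (P : finPOrderType d) (D : fcomplex P)
    (e : 'I_#|P| -> P) (k : nat) : subquot_module #|P| :=
  @SubquotModule #|P| (fc_n D)
    (fun i => (sel_mx (fun j => in_prefix e i (fc_gr D j) && (fc_dg D j == k))
                 :&: kermx (fc_d D))%MS)
    (fun i => sel_mx (fun j => in_prefix e i (fc_gr D j) && (fc_dg D j == k.+1))
                 *m fc_d D).

(* Simplicial chains C(K) over Z_2 (basis: the simplices of K) and
   H_k(C(K_0)) -> ... -> H_k(C(K_(m-1))), K_i = U_{j <= i} M (e j). *)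
Definition simplicial_boundary (V : finType) (K : {set {set V}}) : 'M['F_2]_#|K| :=
  \matrix_(i, j) (facet (enum_val j) (enum_val i))%:R.

Definition filt_subcomplex (V : finType) d (P : finPOrderType d)
    (M : P -> {set {set V}}) (e : 'I_#|P| -> P) (i : 'I_#|P|) : {set {set V}} :=
  \bigcup_(l : 'I_#|P| | (l <= i)%N) M (e l).

Definition simplicial_homology_module (V : finType) (K : {set {set V}}) d
    (P : finPOrderType d) (M : P -> {set {set V}}) (e : 'I_#|P| -> P) (k : nat)
    : subquot_module #|P| :=
  @SubquotModule #|P| #|K|
    (fun i => (sel_mx (fun j : 'I_#|K| => (enum_val j \in filt_subcomplex M e i)
                         && (#|enum_val j| == k.+1))
                 :&: kermx (simplicial_boundary K))%MS)
    (fun i => sel_mx (fun j : 'I_#|K| => (enum_val j \in filt_subcomplex M e i)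
                         && (#|enum_val j| == k.+2))
                 *m simplicial_boundary K).

(* Main.v *)
Require Import Defs.
From HB Require Import structures.
From mathcomp Require Import all_boot all_order all_algebra.
From mathcomp Require Import reals zify lra.
From Stdlib Require Import FunctionalExtensionality.
Set Implicit Arguments.
Unset Strict Implicit.
Unset Printing Implicit Defensive.
Import Order.TTheory GRing.Theory Num.Theory.
Local Open Scope ring_scope.

Notation F2 := 'F_2.

Lemma rank_ker_le m n p q (A : 'M[F2]_(m,n)) (M1 : 'M_(n,p)) (M2 : 'M_(n,q)) :
  (forall v : 'rV_n, (v <= A)%MS -> v *m M2 = 0 -> v *m M1 = 0) ->
  (\rank (A *m M1) <= \rank (A *m M2))%N.
Proof.
move=> H.
have H1 := mxrank_mul_ker A M1; have H2 := mxrank_mul_ker A M2.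
have H3 : (\rank (A :&: kermx M2) <= \rank (A :&: kermx M1))%N.
  apply: mxrankS; apply/row_subP => i; rewrite sub_capmx.
  have hA : (row i (A :&: kermx M2) <= A)%MS := submx_trans (row_sub _ _) (capmxSl _ _).
  rewrite hA /= sub_kermx; apply/eqP/H => //; apply/eqP; rewrite -sub_kermx.
  exact: submx_trans (row_sub _ _) (capmxSr _ _).
by rewrite -(leq_add2r (\rank (A :&: kermx M1))) H1 -H2 leq_add2l.
Qed.

Lemma rank_ker_eq m n p q (A : 'M[F2]_(m,n)) (M1 : 'M_(n,p)) (M2 : 'M_(n,q)) :
  (forall v : 'rV_n, (v <= A)%MS -> (v *m M1 == 0) = (v *m M2 == 0)) ->
  \rank (A *m M1) = \rank (A *m M2).
Proof.
move=> H; apply/eqP; rewrite eqn_leq; apply/andP; split; apply: rank_ker_le => v vA /eqP.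
  by rewrite -H // => /eqP.
by rewrite H // => /eqP.
Qed.

Lemma rank_sel n (c : 'I_n -> bool) :
  \rank (diag_mx (\row_j (c j)%:R : 'rV[F2]_n)) = #|[pred j | c j]|.
Proof.
set r := #|[pred j | c j]|.
pose E : 'M[F2]_(r, n) := \matrix_(k, j) ((enum_val k == j)%:R).
have EET : E *m E^T = 1%:M.
  apply/matrixP => k k'; rewrite !mxE (bigD1 (enum_val k)) //= big1 ?addr0.
    by rewrite !mxE eqxx mul1r (inj_eq enum_val_inj) eq_sym.
  by move=> j /negbTE hj; rewrite !mxE eq_sym hj mul0r.
have ETE : E^T *m E = diag_mx (\row_j (c j)%:R).
  apply/matrixP => a b; rewrite !mxE.
  case ca: (c a).
    have aP : a \in [pred j | c j] by rewrite inE.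
    rewrite (bigD1 (enum_rank_in aP a)) //= big1 ?addr0.
      by rewrite !mxE enum_rankK_in // eqxx mul1r; case: (a == b).
    move=> k hk; rewrite !mxE; case: (enum_val k =P a) => [ha|_]; last by rewrite mul0r.
    by move: hk; rewrite -(enum_valK_in aP k) ha eqxx.
  rewrite big1; first by case: (a == b); rewrite ?mulr1n ?mulr0n.
  move=> k _; rewrite !mxE; case: (enum_val k =P a) => [ha|]; last by rewrite mul0r.
  by have := enum_valP k; rewrite inE ha ca.
have rE : \rank E = r.
  apply/eqP; rewrite eqn_leq rank_leq_row /=.
  by rewrite -{1}(mxrank1 F2 r) -EET mxrankM_maxl.
rewrite -rE; apply/eqmx_rank; apply/andP; split.
  by rewrite -ETE submxMl.
apply/row_subP => k; rewrite -ETE.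
have -> : row k E = row k E *m (E^T *m E).
  by rewrite mulmxA -row_mul EET -row_mul mul1mx.
by rewrite submxMl.
Qed.

Lemma mulF2b (x y : bool) : (x%:R * y%:R : F2) = (x && y)%:R.
Proof. by case: x; case: y; rewrite ?mul1r ?mul0r. Qed.

Definition rk m (X : subquot_module m) (i j : 'I_m) : nat :=
  \rank (sq_Z X i *m cokermx (sq_B X j)).

Definition Zmono m (X : subquot_module m) : Prop :=
  forall i j : 'I_m, (i <= j)%N -> (sq_Z X i <= sq_Z X j)%MS.

Lemma diag_mulb n (c c' : 'I_n -> bool) :
  diag_mx (\row_j (c j)%:R : 'rV[F2]_n) *m diag_mx (\row_j (c' j)%:R) =
  diag_mx (\row_j (c j && c' j)%:R).
Proof.
rewrite mul_diag_mx; apply/matrixP => a b; rewrite !mxE.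
by case: (a == b); rewrite ?mulr1n ?mulr0n ?mulr0 // mulF2b.
Qed.

Lemma barcode_rank m (X : subquot_module m) J (bar : 'I_J -> 'I_m * 'I_m) :
  Zmono X -> interval_decomposition X bar ->
  forall i j : 'I_m, (i <= j)%N ->
  #|[pred k | alive (bar k) i && alive (bar k) j]| = rk X i j.
Proof.
move=> Zm [hab [Psi [H1 H2 H3]]].
have step : forall n (i j : 'I_m), nat_of_ord j = (i + n)%N ->
   (sq_Z X i *m Psi j == diag_mx (\row_k (alive (bar k) i && alive (bar k) j)%:R))%MS.
  elim=> [|n IH] i j hj.
    have -> : j = i by apply/val_inj; rewrite /= hj addn0.
    have -> : \row_k (alive (bar k) i && alive (bar k) i)%:R = \row_k (alive (bar k) i)%:R :> 'rV[F2]_J.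
      by apply/rowP => k; rewrite !mxE andbb.
    exact: H2.
  have lt0 : (i + n < m)%N by move: (ltn_ord j); rewrite hj; lia.
  pose j0 := Ordinal lt0.
  have hj0 : nat_of_ord j = (nat_of_ord j0).+1 by rewrite hj /= addnS.
  have /submxP [W hW] : (sq_Z X i <= sq_Z X j0)%MS by apply: Zm => /=; lia.
  have -> : sq_Z X i *m Psi j = sq_Z X i *m Psi j0 *m diag_mx (\row_k (alive (bar k) j)%:R).
    by rewrite hW -!mulmxA (H3 j0 j hj0) !mulmxA.
  have IH0 := IH i j0 erefl.
  apply/eqmxP; apply: eqmx_trans (eqmxMr _ (eqmxP IH0)) _.
  rewrite diag_mulb.
  have -> : \row_k ((alive (bar k) i && alive (bar k) j0) && alive (bar k) j)%:R =
            \row_k (alive (bar k) i && alive (bar k) j)%:R :> 'rV[F2]_J.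
    apply/rowP => k; rewrite !mxE; congr (_%:R); rewrite /alive.
    move: hj; rewrite /=; case: (bar k) => [x y] /= hj; lia.
  exact: eqmx_refl.
move=> i j hij.
rewrite /rk -rank_sel.
have hE := step (j - i)%N i j ltac:(lia).
rewrite -(eqmx_rank hE).
apply: rank_ker_eq => v vZ.
rewrite -sub_kermx -submxE.
have E1 := eqmxP (H1 j).
rewrite -E1 sub_capmx (submx_trans vZ (Zm _ _ hij)).
by [].
Qed.
Lemma count_lin (T : eqType) (t : seq T) (A B C D E : pred T) :
  (forall z, z \in t -> (A z + B z + C z = D z + E z)%N) ->
  (count A t + count B t + count C t = count D t + count E t)%N.
Proof.
elim: t => [|x t IH] //= H.
have := H x (mem_head _ _); have := IH (fun z hz => H z (mem_behead (hz : z \in behead (x :: t)))).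
lia.
Qed.

Section Diag.
Variable R : realType.
Local Open Scope ring_scope.

Definition gtv (y : option R) (v : R) : bool := if y is Some w then v < w else true.

Definition below (xs : seq R) (a : R) : R :=
  foldr (fun x acc => if (x < a) && (acc < x) then x else acc) (a - 1) xs.

Lemma below_lt xs a : below xs a < a.
Proof.
elim: xs => [|x xs IH] /=; first lra.
by case: ifP => // /andP [].
Qed.

Lemma below_spec xs a x : x \in xs -> (x <= below xs a) = (x < a).
Proof.
move=> hx; case: (ltP x a) => xa; last first.
  by apply/negbTE; rewrite -ltNge; apply: lt_le_trans (below_lt _ _) xa.
elim: xs hx => [//|y xs IH]; rewrite inE => /orP [/eqP <-|hx] /=.
  rewrite xa /=; case: (ltP (below xs a) x) => h; [by rewrite lexx | by rewrite h].
case: ifP => [hh|_]; last exact: IH hx.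
move/andP: hh => [_ h]; exact: le_trans (IH hx) (ltW h).
Qed.

Lemma diag_determined (s1 s2 : seq (R * option R)) :
  (forall z, z \in s1 ++ s2 -> gtv z.2 z.1) ->
  (forall u v, u <= v -> count (fun z => (z.1 <= u) && gtv z.2 v) s1 =
                         count (fun z => (z.1 <= u) && gtv z.2 v) s2) ->
  (forall u, count (fun z => (z.1 <= u) && (z.2 == None)) s1 =
             count (fun z => (z.1 <= u) && (z.2 == None)) s2) ->
  perm_eq s1 s2.
Proof.
move=> hval Hc Hn.
set s := s1 ++ s2.
have sub1 : forall z, z \in s1 -> z \in s by move=> z hz; rewrite mem_cat hz.
have sub2 : forall z, z \in s2 -> z \in s by move=> z hz; rewrite mem_cat hz orbT.
apply/allP => [[a y]] _; apply/eqP.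
set a' := below [seq z.1 | z <- s] a.
have A1 : forall z, z \in s -> (z.1 <= a') = (z.1 < a).
  by move=> z hz; apply: below_spec; apply: map_f.
have a'a : a' < a by apply: below_lt.
case: y => [y|].
  case: (ltP a y) => ay; last first.
    have nin : forall t, (forall z, z \in t -> z \in s) -> count_mem (a, Some y) t = 0%N.
      move=> t ht; apply/count_memPn/negP => /ht /hval /=; rewrite ltNge ay //.
    by rewrite !nin.
  set y' := below (a :: pmap snd s) y.
  have A2 : forall w, w \in a :: pmap snd s -> (w <= y') = (w < y).
    by move=> w hw; apply: below_spec.
  have ay' : a <= y' by rewrite A2 ?mem_head.
  have key : forall t, (forall z, z \in t -> z \in s) ->
    (count_mem (a, Some y) t + count (fun z => (z.1 <= a')%R && gtv z.2 y') t
       + count (fun z => (z.1 <= a)%R && gtv z.2 y) t =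
     count (fun z => (z.1 <= a)%R && gtv z.2 y') t + count (fun z => (z.1 <= a')%R && gtv z.2 y) t)%N.
    move=> t ht; apply: count_lin => z hz; have hzs := ht z hz.
    rewrite A1 //; case: z hz hzs => x w hz hzs /=.
    case: w hz hzs => [w|] hz hzs /=; last first.
      by rewrite xpair_eqE andbF !andbT; case: (ltgtP x a).
    have hw : w \in a :: pmap snd s.
      by rewrite inE; apply/orP; right; rewrite mem_pmap; apply/mapP; exists (x, Some w).
    rewrite xpair_eqE (ltNge y' w) A2 // -leNgt.
    have -> : (Some w == Some y) = (w == y) by [].
    by case: (ltgtP x a); case: (ltgtP w y).
  have k1 := key s1 sub1; have k2 := key s2 sub2.
  rewrite (Hc a y') // (Hc a y) ?ltW // (Hc a' y') ?(le_trans (ltW a'a)) // (Hc a' y) ?(ltW (lt_trans a'a ay)) // in k1.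
  by move: k1; rewrite -k2 => /eqP; rewrite !eqn_add2r => /eqP.
have key : forall t, (forall z, z \in t -> z \in s) ->
  (count_mem (a, None) t + count (fun z => (z.1 <= a')%R && (z.2 == None)) t + count pred0 t =
   count (fun z => (z.1 <= a)%R && (z.2 == None)) t + count pred0 t)%N.
  move=> t ht; apply: count_lin => z hz; have hzs := ht z hz.
  rewrite A1 //; case: z hz hzs => x w hz hzs /=.
  by rewrite xpair_eqE; case: (w == None); rewrite ?andbT ?andbF; case: (ltgtP x a).
have k1 := key s1 sub1; have k2 := key s2 sub2.
rewrite !count_pred0 in k1 k2; rewrite Hn (Hn a) in k1.
by move: k1; rewrite -k2 => /eqP; rewrite !eqn_add2r => /eqP.
Qed.

Lemma card_count (T : finType) (c : pred T) : #|[pred j | c j]| = count c (enum T).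
Proof. by rewrite cardE /enum_mem size_filter count_filter; apply: eq_count => x; rewrite /= !inE andbT. Qed.

Section Count.
Variables (m : nat) (fe : 'I_m -> R).
Hypothesis mono : forall i j : 'I_m, (i <= j)%N -> fe i <= fe j.

Lemma diag_count (X : subquot_module m) J (b : 'I_J -> 'I_m * 'I_m) (u v : R) (iu iv : 'I_m) :
  Zmono X -> interval_decomposition X b ->
  (forall i, (fe i <= u) = (i <= iu)%N) -> (forall i, (fe i <= v) = (i <= iv)%N) ->
  u <= v -> (iu <= iv)%N ->
  count (fun z => (z.1 <= u) && gtv z.2 v) (pers_diagram fe b) = rk X iu iv.
Proof.
move=> Zm dec hu hv uv uiv.
rewrite -(barcode_rank Zm dec uiv) card_count /pers_diagram count_map count_filter.
apply: eq_count => k /=; rewrite hu.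
case: dec => hab _; have := hab k; case: (b k) => [a bb] /= hab'.
rewrite /alive /=.
case: insubP => [kk hk hkv|hk] /=.
  rewrite ltNge hv hkv.
  have -> : (Some (fe a) != Some (fe kk)) = (fe a != fe kk) by [].
  case: (leqP a iu) => hai /=; last by [].
  case: (ltnP bb iv) => hbi /=.
    by apply/esym/negbTE; lia.
  have : fe a < fe kk.
    apply: (le_lt_trans (y := u)); first by rewrite hu.
    apply: (le_lt_trans uv); rewrite ltNge hv -ltnNge; have hk2 : nat_of_ord kk = bb.+1 := hkv; lia.
  rewrite lt_neqAle => /andP [-> _]; symmetry; apply/and3P; split; lia.
rewrite andbT.
have hb : (nat_of_ord bb).+1 = m by have := ltn_ord bb; lia.
have := ltn_ord iv.
case: (leqP a iu) => hai /=; first by move=> *; apply/esym/andP; split; lia.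
by move=> *; symmetry; apply/negbTE; lia.
Qed.

Lemma diag_countN (X : subquot_module m) J (b : 'I_J -> 'I_m * 'I_m) (u : R) (iu jm : 'I_m) :
  Zmono X -> interval_decomposition X b ->
  (forall i, (fe i <= u) = (i <= iu)%N) -> (nat_of_ord jm).+1 = m ->
  count (fun z => (z.1 <= u) && (z.2 == None)) (pers_diagram fe b) = rk X iu jm.
Proof.
move=> Zm dec hu hjm.
have uiv : (iu <= jm)%N by have := ltn_ord iu; lia.
rewrite -(barcode_rank Zm dec uiv) card_count /pers_diagram count_map count_filter.
apply: eq_count => k /=; rewrite hu.
case: dec => hab _; have := hab k; case: (b k) => [a bb] /= hab'.
rewrite /alive /=.
have := ltn_ord bb.
case: insubP => [kk hk hkv|hk] /=.
  by rewrite andbF /=; move=> *; apply/esym/negbTE; lia.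
rewrite andbT => *.
case: (leqP a iu) => hai /=; first by apply/esym/and3P; split; lia.
by apply/esym/negbTE; lia.
Qed.

Lemma diag_count0 J (b : 'I_J -> 'I_m * 'I_m) (u : R) (Q : pred (R * option R)) :
  (forall i, ~~ (fe i <= u)) ->
  count (fun z => (z.1 <= u) && Q z) (pers_diagram fe b) = 0%N.
Proof.
move=> h; rewrite /pers_diagram count_map count_filter.
by rewrite (eq_count (a2 := pred0)) ?count_pred0 // => k /=; rewrite (negbTE (h _)).
Qed.

Lemma last_idx (u : R) : (exists i, fe i <= u) ->
  exists iu : 'I_m, forall i, (fe i <= u) = (i <= iu)%N.
Proof.
move=> [i0 hi0].
case: (@arg_maxnP _ i0 (fun i => fe i <= u) (fun i => nat_of_ord i) hi0) => iu hiu hmax.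
exists iu => i; apply/idP/idP; first exact: hmax.
by move=> hi; apply: le_trans (mono hi) hiu.
Qed.

Definition blockend (i : 'I_m) := forall j : 'I_m, (i < j)%N -> fe i < fe j.

Lemma last_idx_blockend (u : R) (iu : 'I_m) :
  (forall i, (fe i <= u) = (i <= iu)%N) -> blockend iu.
Proof.
move=> hu j hj; have : fe iu <= u by rewrite hu.
have : ~~ (fe j <= u) by rewrite hu -ltnNge.
rewrite -ltNge => h1 h2; exact: le_lt_trans h2 h1.
Qed.

Lemma diag_valid J (b : 'I_J -> 'I_m * 'I_m) :
  (forall j, ((b j).1 <= (b j).2)%N) ->
  forall z, z \in pers_diagram fe b -> gtv z.2 z.1.
Proof.
move=> hab z /mapP [k]; rewrite mem_filter => /andP [hk _] ->.
move: hk; have := hab k; case: (b k) => [a bb] /= hab'.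
case: insubP => [kk _ hkv|] //=.
have -> : (Some (fe a) != Some (fe kk)) = (fe a != fe kk) by [].
move=> hne; rewrite lt_neqAle hne /=; apply: mono.
have hk2 : nat_of_ord kk = bb.+1 := hkv; lia.
Qed.

Lemma main_diag (X1 X2 : subquot_module m) J1 J2
    (b1 : 'I_J1 -> 'I_m * 'I_m) (b2 : 'I_J2 -> 'I_m * 'I_m) :
  Zmono X1 -> Zmono X2 -> interval_decomposition X1 b1 -> interval_decomposition X2 b2 ->
  (forall i j : 'I_m, (i <= j)%N -> blockend i -> blockend j -> rk X1 i j = rk X2 i j) ->
  perm_eq (pers_diagram fe b1) (pers_diagram fe b2).
Proof.
move=> Z1 Z2 d1 d2 H.
apply: diag_determined.
- move=> z; rewrite mem_cat => /orP [] hz.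
    by apply: (diag_valid _ hz); case: d1.
  by apply: (diag_valid _ hz); case: d2.
- move=> u v uv.
  case: (boolP [exists i, fe i <= u]) => [/existsP hex|hnex]; last first.
    have h : forall i, ~~ (fe i <= u) by move=> i; apply: contra hnex => hi; apply/existsP; exists i.
    by rewrite !(diag_count0 _ _ h).
  have [iu hu] := last_idx hex.
  have [iv hv] : exists iv : 'I_m, forall i, (fe i <= v) = (i <= iv)%N.
    by apply: last_idx; exists iu; apply: le_trans uv; rewrite hu.
  have uiv : (iu <= iv)%N by rewrite -hv; apply: le_trans uv; rewrite hu.
  rewrite (diag_count Z1 d1 hu hv uv uiv) (diag_count Z2 d2 hu hv uv uiv).
  by apply: H => //; apply: last_idx_blockend; eauto.
- move=> u.
  case: (boolP [exists i, fe i <= u]) => [/existsP hex|hnex]; last first.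
    have h : forall i, ~~ (fe i <= u) by move=> i; apply: contra hnex => hi; apply/existsP; exists i.
    by rewrite !(diag_count0 _ _ h).
  have [iu hu] := last_idx hex.
  have hm : (m.-1 < m)%N by have := ltn_ord iu; lia.
  pose jm := Ordinal hm.
  have hjm : (nat_of_ord jm).+1 = m by rewrite /=; have := ltn_ord iu; lia.
  rewrite (diag_countN Z1 d1 hu hjm) (diag_countN Z2 d2 hu hjm).
  apply: H => //.
  + by have := ltn_ord iu; rewrite /=; lia.
  + exact: last_idx_blockend hu.
  + by move=> j hj; have := ltn_ord j; rewrite /=; lia.
Qed.
End Count.

End Diag.

Lemma sel_sub n1 n2 (b1 : 'I_n1 -> bool) (b2 : 'I_n2 -> bool) (A : 'M[F2]_(n1,n2)) :
  (forall i j, A i j != 0 -> b1 i -> b2 j) -> (sel_mx b1 *m A <= sel_mx b2)%MS.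
Proof.
move=> h.
have -> : sel_mx b1 *m A = sel_mx b1 *m A *m sel_mx b2.
  apply/matrixP => i j; rewrite /sel_mx mul_mx_diag mul_diag_mx !mxE.
  case: (b1 i) (h i j) => /=; last by rewrite !mul0r.
  case: (A i j =P 0) => [->|/eqP hne] hh; first by rewrite !mulr0 mul0r.
  by rewrite hh // mulr1.
exact: submxMl.
Qed.

Lemma sel_mono n (b1 b2 : 'I_n -> bool) :
  (forall j, b1 j -> b2 j) -> (sel_mx b1 <= sel_mx b2)%MS.
Proof.
move=> h; rewrite -[sel_mx b1]mulmx1; apply: sel_sub => i j; rewrite mxE.
case: (i =P j) => [->|] /= _; first exact: h.
by [].
Qed.

Section Hom.
Variables (d : Order.disp_t) (P : finPOrderType d) (e : 'I_#|P| -> P).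
Hypothesis down : forall i (p q : P), (q <= p)%O -> in_prefix e i p -> in_prefix e i q.

Definition Sk (D : fcomplex P) (i : 'I_#|P|) (k : nat) : 'M[F2]_(fc_n D) :=
  sel_mx (fun j => in_prefix e i (fc_gr D j) && (fc_dg D j == k)).

Lemma in_prefix_mono (i i' : 'I_#|P|) p : (i <= i')%N -> in_prefix e i p -> in_prefix e i' p.
Proof.
move=> hii /existsP [l /andP [hl hp]]; apply/existsP; exists l; rewrite hp andbT.
exact: leq_trans hl hii.
Qed.

Lemma Sk_mono D (i i' : 'I_#|P|) k : (i <= i')%N -> (Sk D i k <= Sk D i' k)%MS.
Proof.
move=> hii; apply: sel_mono => j /andP [h1 h2]; rewrite h2 andbT.
exact: in_prefix_mono h1.
Qed.

Lemma filt_sel (D1 D2 : fcomplex P) r A i k :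
  filtered_map D1 D2 r A -> (Sk D1 i k *m A <= Sk D2 i (k + r))%MS.
Proof.
move=> hA; apply: sel_sub => a b hab /andP [hp /eqP hk].
have [hgr hdg] := hA a b hab.
by rewrite hdg hk eqxx andbT; apply: down hp.
Qed.

Lemma Zmono_fc D k : Zmono (fc_homology_module D e k).
Proof.
move=> i j hij /=; apply: capmxS => //.
exact: (Sk_mono D k hij).
Qed.

Lemma rk_le (D1 D2 : fcomplex P) phi phi' :
  filtered_chain_map D1 D2 phi -> filtered_chain_map D2 D1 phi' ->
  filtered_homotopic D1 D1 (phi *m phi') 1%:M ->
  forall k (i j : 'I_#|P|), (i <= j)%N ->
  (rk (fc_homology_module D1 e k) i j <= rk (fc_homology_module D2 e k) i j)%N.
Proof.
move=> [f1 c1] [f2 c2] [S [fS hS]] k i j hij.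
rewrite /rk /=.
set Z1 := (_ :&: kermx (fc_d D1))%MS.
set Z2 := (_ :&: kermx (fc_d D2))%MS.
set B1 := _ *m fc_d D1. set B2 := _ *m fc_d D2.
apply: (@leq_trans (\rank (Z1 *m (phi *m cokermx B2)))).
  apply: rank_ker_le => v vZ.
  have vS : (v <= Sk D1 i k)%MS := submx_trans vZ (capmxSl _ _).
  have vd : v *m fc_d D1 = 0 by apply/sub_kermxP; exact: submx_trans vZ (capmxSr _ _).
  move=> /eqP; rewrite mulmxA -submxE => vphi.
  apply/eqP; rewrite -submxE.
  have e1 : v = v *m (phi *m phi') + v *m S *m fc_d D1.
    have : v *m (1%:M - phi *m phi') = v *m (S *m fc_d D1 + fc_d D1 *m S) by rewrite hS.
    rewrite mulmxBr mulmx1 mulmxDr !mulmxA vd mul0mx addr0 => h.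
    by rewrite -h addrC subrK.
  rewrite e1; apply: addmx_sub.
    case/submxP: vphi => w hw.
    rewrite mulmxA hw /B2 -!mulmxA c2 !mulmxA /B1; apply: submxMr.
    rewrite -mulmxA; apply: submx_trans (submxMl w _) _.
    by have := filt_sel j k.+1 f2; rewrite addn0.
  apply: submxMr.
  apply: submx_trans (Sk_mono D1 k.+1 hij).
  apply: submx_trans (submxMr S vS) _.
  by have := filt_sel i k fS; rewrite addn1.
rewrite mulmxA; apply: mxrankS; apply: submxMr.
rewrite sub_capmx; apply/andP; split.
  apply: submx_trans (submxMr phi (capmxSl _ _)) _.
  by have := filt_sel i k f1; rewrite addn0.
apply/sub_kermxP; rewrite -mulmxA -c1 mulmxA.
by have /sub_kermxP -> : (Z1 <= kermx (fc_d D1))%MS := capmxSr _ _; rewrite mul0mx.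
Qed.

Lemma rk_eq (D1 D2 : fcomplex P) :
  filtered_chain_homotopy_equivalent D1 D2 ->
  forall k (i j : 'I_#|P|), (i <= j)%N ->
  rk (fc_homology_module D1 e k) i j = rk (fc_homology_module D2 e k) i j.
Proof.
move=> [phi [phi' [c1 c2 h1 h2]]] k i j hij; apply/eqP; rewrite eqn_leq.
by rewrite (rk_le c1 c2 h1) // (rk_le c2 c1 h2).
Qed.
End Hom.

Lemma sum_pick (T : finType) (c : pred T) (F : T -> F2) j0 :
  (forall j, c j = (j == j0)) -> \sum_j (c j)%:R * F j = F j0.
Proof.
move=> hc; rewrite (bigD1 j0) //= big1 ?addr0; first by rewrite hc eqxx mul1r.
by move=> j hj; rewrite hc (negbTE hj) mul0r.
Qed.

Lemma eq_sel n (b b' : 'I_n -> bool) : b =1 b' -> sel_mx b = sel_mx b'.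
Proof. by move=> h; rewrite /sel_mx; congr diag_mx; apply/rowP => j; rewrite !mxE h. Qed.

Section Morse.
Variables (V : finType) (K : {set {set V}}) (mv : {set {set {set V}}})
  (d : Order.disp_t) (P : finPOrderType d) (M : P -> {set {set V}}) (p0 : P).
Hypothesis hK : simplicial_complex K.
Hypothesis hM : morse_decomposition K mv M.

Definition grK (s : {set V}) : P := odflt p0 [pick p | s \in M p].

Lemma grK_spec s : s \in K -> s \in M (grK s).
Proof.
move=> sK; case: hM => _ _ _ hcov _; have [p hp] := hcov s sK.
rewrite /grK; case: pickP => [q hq|/(_ p)] //=; by rewrite hp.
Qed.

Lemma M_sub p s : s \in M p -> s \in K.
Proof. by case: hM => hsub _ _ _ _; move=> hs; apply: (subsetP (hsub p)). Qed.

Lemma grK_uniq s p : s \in M p -> grK s = p.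
Proof.
move=> hs; have sK := M_sub hs; have h2 := grK_spec sK.
case: (grK s =P p) => // /eqP hne.
case: hM => _ _ hdis _ _.
by have := disjointFr (hdis _ _ hne) h2; rewrite hs.
Qed.

Definition Kc : fcomplex P :=
  @FComplex d P #|K| (fun j => grK (enum_val j)) (fun j => #|enum_val j|.-1)
    (simplicial_boundary K).

Definition MC : fcomplex P := morse_complex M.

Lemma MC_mem (i : 'I_#|morse_basis M|) : (enum_val i).2 \in M (enum_val i).1.
Proof. by have := enum_valP i; rewrite inE. Qed.

Lemma eqK s (hs : s \in K) (j : 'I_#|K|) : (s == enum_val j) = (j == enum_rank_in hs s).
Proof.
apply/eqP/eqP => [h|->]; first by rewrite -{1}(enum_valK_in hs j) -h.
by rewrite enum_rankK_in.
Qed.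

Lemma mb_mem t : t \in K -> (grK t, t) \in morse_basis M.
Proof. by move=> tK; rewrite inE /= grK_spec. Qed.

Lemma eqMC t (ht : t \in K) (i : 'I_#|morse_basis M|) :
  ((enum_val i).2 == t) = (i == enum_rank_in (mb_mem ht) (grK t, t)).
Proof.
apply/eqP/eqP => [h|->]; last by rewrite enum_rankK_in // mb_mem.
have h1 := grK_uniq (MC_mem i); rewrite h in h1.
have : enum_val i = (grK t, t) by rewrite h1 -h; case: (enum_val i).
by move=> hv; rewrite -{1}(enum_valK_in (mb_mem ht) i) hv.
Qed.

Definition Pi : 'M[F2]_(#|morse_basis M|, #|K|) :=
  \matrix_(i, j) (((enum_val i).2 == enum_val j)%:R).
Definition Pi' : 'M[F2]_(#|K|, #|morse_basis M|) :=
  \matrix_(j, i) (((enum_val i).2 == enum_val j)%:R).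

Lemma MCK (i : 'I_#|morse_basis M|) : (enum_val i).2 \in K.
Proof. exact: M_sub (MC_mem i). Qed.

Lemma PiPi' : Pi *m Pi' = 1%:M.
Proof.
apply/matrixP => i i'; rewrite !mxE.
under eq_bigr => j _ do rewrite !mxE.
rewrite (sum_pick _ (fun j => eqK (MCK i) j)) enum_rankK_in ?MCK //.
case: (i =P i') => [<-|hne]; first by rewrite eqxx.
case: ((enum_val i').2 =P (enum_val i).2) => // h; exfalso; apply: hne.
apply: enum_val_inj.
rewrite [enum_val i]surjective_pairing [enum_val i']surjective_pairing.
by rewrite -(grK_uniq (MC_mem i)) -(grK_uniq (MC_mem i')) h.
Qed.

Lemma Pi'Pi : Pi' *m Pi = 1%:M.
Proof.
apply/matrixP => j j'; rewrite !mxE.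
under eq_bigr => i _ do rewrite !mxE.
have tK := enum_valP j.
rewrite (sum_pick _ (fun i => eqMC tK i)) enum_rankK_in ?mb_mem //=.
by rewrite (inj_eq enum_val_inj).
Qed.

Lemma chainPi : fc_d MC *m Pi = Pi *m fc_d Kc.
Proof.
apply/matrixP => i j; rewrite !mxE.
have tK := enum_valP j.
under eq_bigr => l _ do rewrite !mxE mulrC.
rewrite (sum_pick _ (fun l => eqMC tK l)) enum_rankK_in ?mb_mem //=.
under eq_bigr => l _ do rewrite !mxE.
by rewrite (sum_pick _ (fun l => eqK (MCK i) l)) enum_rankK_in ?MCK // mxE.
Qed.

Lemma chainPi' : fc_d Kc *m Pi' = Pi' *m fc_d MC.
Proof.
apply/matrixP => j i; rewrite !mxE.
have tK := enum_valP j.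
under eq_bigr => l _ do rewrite !mxE mulrC.
rewrite (sum_pick _ (fun l => eqK (MCK i) l)) enum_rankK_in ?MCK //=.
under eq_bigr => l _ do rewrite !mxE.
by rewrite (sum_pick _ (fun l => eqMC tK l)) enum_rankK_in ?mb_mem // mxE.
Qed.

Lemma MC_Kc : filtered_chain_homotopy_equivalent MC Kc.
Proof.
exists Pi, Pi'; split.
- split; last exact: chainPi.
  move=> i j; rewrite mxE; case: (@eqP _ (enum_val i).2 (enum_val j)) => [h _|_ //=] /=.
  by rewrite -h (grK_uniq (MC_mem i)) lexx addn0.
- split; last exact: chainPi'.
  move=> j i; rewrite mxE; case: (@eqP _ (enum_val i).2 (enum_val j)) => [h _|_ //=] /=.
  by rewrite -h (grK_uniq (MC_mem i)) lexx addn0.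
- exists 0; split; first by move=> i j; rewrite mxE eqxx.
  by rewrite PiPi' subrr mul0mx mulmx0 addr0.
- exists 0; split; first by move=> i j; rewrite mxE eqxx.
  by rewrite Pi'Pi subrr mul0mx mulmx0 addr0.
Qed.

End Morse.

Section Final.
Variables (V : finType) (d : Order.disp_t) (P : finPOrderType d)
  (M : P -> {set {set V}}) (R : realType) (f : {set V} -> R).

Lemma compat_surj (e : 'I_#|P| -> P) : f_compatible_order M f e -> forall p, exists l, e l = p.
Proof.
case=> inj _ _ p.
have /codomP [l ->] : p \in codom e by apply: inj_card_onto => //; rewrite card_ord.
by exists l.
Qed.

Lemma compat_down (e : 'I_#|P| -> P) : f_compatible_order M f e ->
  forall i (p q : P), (q <= p)%O -> in_prefix e i p -> in_prefix e i q.
Proof.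
move=> he i p q hqp /existsP [l /andP [hl /eqP hp]].
have [l' hq] := compat_surj he q.
case: he => _ hlin _.
apply/existsP; exists l'; rewrite hq eqxx andbT.
apply: leq_trans hl; apply: hlin; by rewrite hq hp.
Qed.

Lemma compat_mono (e : 'I_#|P| -> P) : f_compatible_order M f e ->
  forall i j : 'I_#|P|, (i <= j)%N -> fval M f (e i) <= fval M f (e j).
Proof. by case. Qed.

Lemma map_ord_eq n (g g' : 'I_n -> R) :
  [seq g i | i <- enum 'I_n] = [seq g' i | i <- enum 'I_n] -> g =1 g'.
Proof.
move=> h i.
have : nth 0 [seq g i | i <- enum 'I_n] i = nth 0 [seq g' i | i <- enum 'I_n] i by rewrite h.
by rewrite (nth_map i) ?size_enum_ord // nth_ord_enum (nth_map i) ?size_enum_ord // nth_ord_enum.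
Qed.

Lemma fe_eq (e e' : 'I_#|P| -> P) : f_compatible_order M f e -> f_compatible_order M f e' ->
  forall i, fval M f (e i) = fval M f (e' i).
Proof.
move=> he he' i.
have srt : forall g : 'I_#|P| -> P, f_compatible_order M f g ->
    sorted <=%O [seq fval M f (g i) | i <- enum 'I_#|P|].
  move=> g hg; rewrite sorted_map.
  have : sorted (relpre val leq) (enum 'I_#|P|) by rewrite -sorted_map val_enum_ord iota_sorted.
  by apply: sub_sorted => x y /=; apply: compat_mono.
have perm : perm_eq [seq fval M f (e i) | i <- enum 'I_#|P|] [seq fval M f (e' i) | i <- enum 'I_#|P|].
  rewrite (map_comp (fval M f) e) (map_comp (fval M f) e'); apply: perm_map.
  have [inj _ _] := he; have [inj' _ _] := he'.
  apply: uniq_perm; [by rewrite (map_inj_uniq inj) enum_uniq | by rewrite (map_inj_uniq inj') enum_uniq|].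
  move=> p; have [l <-] := compat_surj he p; have [l' hl'] := compat_surj he' (e l).
  by rewrite map_f ?mem_enum // -hl' map_f ?mem_enum.
have := sorted_eq le_trans le_anti (srt _ he) (srt _ he') perm.
by move/map_ord_eq; apply.
Qed.

Lemma filt_prefix (e : 'I_#|P| -> P) i s :
  (s \in filt_subcomplex M e i) = [exists p, in_prefix e i p && (s \in M p)].
Proof.
apply/bigcupP/existsP => [[l hl hs]|[p /andP [/existsP [l /andP [hl /eqP <-]] hs]]].
  by exists (e l); rewrite hs andbT; apply/existsP; exists l; rewrite hl eqxx.
by exists l.
Qed.

Lemma prefix_block (e : 'I_#|P| -> P) : f_compatible_order M f e ->
  forall i, blockend (fun i => fval M f (e i)) i ->
  forall p, in_prefix e i p = (fval M f p <= fval M f (e i)).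
Proof.
move=> he i hb p; apply/existsP/idP => [[l /andP [hl /eqP <-]]|hp].
  exact: compat_mono he _ _ hl.
have [l hl] := compat_surj he p.
exists l; rewrite hl eqxx andbT; case: (leqP l i) => // hil.
by have := hb l hil; rewrite hl ltNge hp.
Qed.

Lemma Zmono_simp (K : {set {set V}}) (e : 'I_#|P| -> P) k :
  Zmono (simplicial_homology_module K M e k).
Proof.
move=> i j hij /=; apply: capmxS => //; apply: sel_mono => t /andP [h1 ->]; rewrite andbT.
move: h1; rewrite !filt_prefix => /existsP [p /andP [hp hs]].
by apply/existsP; exists p; rewrite hs andbT; apply: in_prefix_mono hp.
Qed.

Lemma simp_Kc (K : {set {set V}}) mv (p0 : P) (e : 'I_#|P| -> P) k :
  simplicial_complex K -> morse_decomposition K mv M ->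
  forall i j, rk (simplicial_homology_module K M e k) i j = rk (fc_homology_module (Kc K M p0) e k) i j.
Proof.
move=> hK hM i j.
have hsel : forall i k', (fun t : 'I_#|K| => (enum_val t \in filt_subcomplex M e i) && (#|enum_val t| == k'.+1))
     =1 (fun t => in_prefix e i (grK M p0 (enum_val t)) && (#|enum_val t|.-1 == k')).
  move=> i0 k' t /=; have tK := enum_valP t.
  congr andb.
    rewrite filt_prefix; apply/existsP/idP => [[p /andP [hp hs]]|hp].
      by rewrite (grK_uniq p0 hM hs).
    by exists (grK M p0 (enum_val t)); rewrite hp (grK_spec p0 hM tK).
  have : enum_val t != set0 by case: hK => h0 _; apply: contraNneq h0 => <-.
  by rewrite -card_gt0; case: #|enum_val t|.
by rewrite /rk /= (eq_sel (hsel i k)) (eq_sel (hsel j k.+1)).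
Qed.

End Final.

Unset Implicit Arguments.
Theorem theorem4 (V : finType) (K : {set {set V}}) (mv : {set {set {set V}}})
    (d : Order.disp_t) (P : finPOrderType d) (M : P -> {set {set V}})
    (R : realType) (f : {set V} -> R)
    (e e' : 'I_#|P| -> P) (Cb Cb' : fcomplex P) :
  simplicial_complex K ->
  multivector_field K mv ->
  morse_decomposition K mv M ->
  lyapunov M f ->
  f_compatible_order M f e ->
  f_compatible_order M f e' ->
  conley_complex M Cb ->
  conley_complex M Cb' ->
  forall (k : nat) (J1 J2 J3 J4 : nat)
    (b1 : 'I_J1 -> 'I_#|P| * 'I_#|P|) (b2 : 'I_J2 -> 'I_#|P| * 'I_#|P|)
    (b3 : 'I_J3 -> 'I_#|P| * 'I_#|P|) (b4 : 'I_J4 -> 'I_#|P| * 'I_#|P|),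
  interval_decomposition (fc_homology_module Cb e k) b1 ->
  interval_decomposition (simplicial_homology_module K M e k) b2 ->
  interval_decomposition (simplicial_homology_module K M e' k) b3 ->
  interval_decomposition (fc_homology_module Cb' e' k) b4 ->
  let fe := fun i => fval M f (e i) in
  let fe' := fun i => fval M f (e' i) in
  [/\ perm_eq (pers_diagram fe b1) (pers_diagram fe b2),
      perm_eq (pers_diagram fe b2) (pers_diagram fe' b3) &
      perm_eq (pers_diagram fe' b3) (pers_diagram fe' b4)].
Proof.
move=> hK hmv hM hly he he' hC hC' k J1 J2 J3 J4 b1 b2 b3 b4 d1 d2 d3 d4 fe fe'.
have cb_simp : forall (E : 'I_#|P| -> P) (D : fcomplex P), f_compatible_order M f E ->
    conley_complex M D -> forall i j : 'I_#|P|, (i <= j)%N ->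
    rk (fc_homology_module D E k) i j = rk (simplicial_homology_module K M E k) i j.
  move=> E D hE [_ hD _] i j hij.
  have down := compat_down hE.
  rewrite (rk_eq down hD k hij) (rk_eq down (MC_Kc (e i) hM) k hij).
  by rewrite (simp_Kc (e i) E k hK hM).
have fee : forall i, fe' i = fe i by move=> i; rewrite /fe /fe' (fe_eq he he').
split.
- apply: (main_diag (compat_mono he) (Zmono_fc _ _ _) (Zmono_simp _ _ _ _) d1 d2).
  by move=> i j hij _ _; apply: cb_simp.
- have Efe : fe' = fe := functional_extensionality _ _ fee.
  rewrite Efe.
  apply: (main_diag (compat_mono he) (Zmono_simp _ _ _ _) (Zmono_simp _ _ _ _) d2 d3).
  move=> i j hij bi bj.
  have hfilt : forall l : 'I_#|P|, blockend fe l -> filt_subcomplex M e l = filt_subcomplex M e' l.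
    move=> l bl; apply/setP => s; rewrite !filt_prefix.
    have bl' : blockend fe' l by move=> x hx; rewrite !fee; apply: bl.
    apply: eq_existsb => p.
    by rewrite (prefix_block he bl) (prefix_block he' bl') -/(fe' l) fee.
  by rewrite /rk /= (hfilt i bi) (hfilt j bj).
- have mono' := compat_mono he'.
  apply: (main_diag mono' (Zmono_simp _ _ _ _) (Zmono_fc _ _ _) d3 d4).
  by move=> i j hij _ _; symmetry; apply: cb_simp.
Qed.
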